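(* Let $(P_n)_{n\ge 0}$ be the sequence of polynomials in one variable $m$ defined by $P_0(m)=m$ and, for $n\ge 0$, \[P_{n+1}(m)=P_n(m+1)+\sum_{i=0}^{n}P_i(m)\,P_{n-i}(m).\] Then for every $n\ge 0$ the degree of $P_n$ is equal to $n+1$.
   Context: The polynomials $P_n$ have integer coefficients; $P_n(0)$ equals the number of closed lambda terms of size $n$ (de Bruijn indices having size $0$, abstractions and applications size $1$), though this interpretation is not needed for the claim. *)

(* Defs.v *)
From mathcomp Require Import all_boot all_algebra.
Set Implicit Arguments. Unset Strict Implicit. Unset Printing Implicit Defensive.
Import GRing.Theory.
Local Open Scope ring_scope.

(* Ptab n = [:: P_0; P_1; ...; P_n], polynomials over int in the variable m. *)
Fixpoint Ptab (n : nat) : seq {poly int} :=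
  match n with
  | 0 => [:: 'X]
  | k.+1 =>
      let s := Ptab k in
      let Pk := nth 0 s k in
      rcons s (Pk \Po ('X + 1) + \sum_(i < k.+1) nth 0 s i * nth 0 s (k - i))
  end.

Definition P (n : nat) : {poly int} := nth 0 (Ptab n) n.

Lemma size_Ptab n : size (Ptab n) = n.+1.
Proof. by elim: n => //= n IH; rewrite size_rcons IH. Qed.

Lemma Ptab_nth n k : (k <= n)%N -> nth 0 (Ptab n) k = P k.
Proof.
elim: n => [|n IH] kn; first by case: k kn.
rewrite /= nth_rcons size_Ptab; case: ltngtP kn => // [kn _|-> _].
  by rewrite IH.
by rewrite /P /= nth_rcons size_Ptab ltnn eqxx.
Qed.

Lemma P0 : P 0 = 'X.
Proof. by []. Qed.

Lemma PS n : P n.+1 = P n \Po ('X + 1) + \sum_(i < n.+1) P i * P (n - i).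
Proof.
rewrite /P /= nth_rcons size_Ptab ltnn eqxx Ptab_nth //.
congr (_ + _); apply: eq_bigr => i _.
by rewrite !Ptab_nth // ?leq_subr // -ltnS.
Qed.

(* Main.v *)
Require Import Defs.
From mathcomp Require Import all_boot all_order all_algebra.
Import Order.TTheory GRing.Theory Num.Theory.
Local Open Scope ring_scope.

Lemma Pstrong n : size (P n) = n.+2 /\ 0 < lead_coef (P n).
Proof.
elim/ltn_ind: n => n IH.
case: n IH => [|n] IH.
  by rewrite P0 size_polyX lead_coefX.
have Hi : forall i : 'I_n.+1, size (P i * P (n - i)) = n.+3 /\
      lead_coef (P i * P (n - i)) = lead_coef (P i) * lead_coef (P (n - i)).
  move=> i.
  have [s1 l1] := IH i (leq_trans (ltn_ord i) (ltnSn _)).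
  have [s2 l2] : size (P (n - i)) = (n - i).+2 /\ 0 < lead_coef (P (n - i)).
    by apply: IH; rewrite ltnS leq_subr.
  split; last by rewrite lead_coefM.
  rewrite size_mul; last first.
    - by rewrite -lead_coef_eq0 gt_eqF.
    - by rewrite -lead_coef_eq0 gt_eqF.
  rewrite s1 s2 /=; have := ltn_ord i; rewrite ltnS => lei.
  by rewrite addSn addnS /=; congr (_.+2); rewrite addnS subnKC.
have [sn ln] := IH n (ltnSn _).
set A := P n \Po ('X + 1).
set S := \sum_(i < n.+1) P i * P (n - i).
have sA : size A = n.+2.
  by rewrite /A size_comp_poly2 // size_XaddC.
have cS : S`_(n.+2) = \sum_(i < n.+1) lead_coef (P i) * lead_coef (P (n - i)).
  rewrite /S coef_sum; apply: eq_bigr => i _.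
  have [s e] := Hi i; by rewrite -e lead_coefE s.
have cSpos : 0 < S`_(n.+2).
  rewrite cS big_ord_recl /=.
  apply: (@lt_le_trans _ _ (lead_coef (P 0) * lead_coef (P (n - 0)))).
    rewrite mulr_gt0 //; first by rewrite P0 lead_coefX.
    by rewrite subn0.
  rewrite lerDl sumr_ge0 // => i _.
  have [_ l1] := IH (lift ord0 i) (leq_trans (ltn_ord _) (ltnSn _)).
  have [_ l2] : size (P (n - (lift ord0 i))) = (n - (lift ord0 i)).+2 /\ 0 < lead_coef (P (n - (lift ord0 i))).
    by apply: IH; rewrite ltnS leq_subr.
  by rewrite ltW // mulr_gt0.
have cQ : (A + S)`_(n.+2) = S`_(n.+2).
  by rewrite coefD nth_default ?sA // add0r.
have sQle : (size (A + S)%R <= n.+3)%N.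
  apply/leq_sizeP => j hj; rewrite coefD nth_default ?sA ?add0r; last first.
    by apply: leq_trans hj; rewrite ltnW.
  rewrite /S coef_sum big1 // => i _; have [s _] := Hi i.
  by rewrite nth_default // s.
have sQ : size (A + S) = n.+3.
  apply/eqP; rewrite eqn_leq sQle /=.
  rewrite ltnNge; apply/negP => h.
  by move: cSpos; rewrite -cQ nth_default // ltxx.
rewrite PS -/A -/S; split => //.
by rewrite lead_coefE sQ /= cQ.
Qed.

Theorem lemma1 : forall n : nat, (size (P n)).-1 = n.+1.
Proof. by move=> n; have [-> _] := Pstrong n. Qed.
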